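(* Let $\mathbf n\ge 2$, let $A=B=C$ be the space of $\mathbf n\times\mathbf n$ complex matrices, and let $M_{\langle\mathbf n\rangle}\in A\otimes B\otimes C$ be the matrix multiplication tensor. Let $r=2\mathbf n^2-2$ and suppose that $$M_{\langle\mathbf n\rangle}=\sum_{\substack{i,j,k\ge 1\\ i+j+k\le r+2}} a_i\otimes b_j\otimes c_k$$ for some vectors $a_1,\dots,a_r\in A$, $b_1,\dots,b_r\in B$, $c_1,\dots,c_r\in C$ (so that $M_{\langle\mathbf n\rangle}$ lies in the open bud $\mathfrak b^\circ_r(Seg(\mathbb PA\times\mathbb PB\times\mathbb PC),[a_1\otimes b_1\otimes c_1])$; here $[a_1\otimes b_1\otimes c_1]$ is assumed to lie in $\mathcal K$). Then: (1) no two of the three sets $\{a_1,\dots,a_{\mathbf n^2}\}$, $\{b_1,\dots,b_{\mathbf n^2}\}$, $\{c_1,\dots,c_{\mathbf n^2}\}$ can both be linearly independent; and (2) each of $\dim\langle a_1,\dots,a_{2\mathbf n^2-\mathbf n-1}\rangle$, $\dim\langle b_1,\dots,b_{2\mathbf n^2-\mathbf n-1}\rangle$, $\dim\langle c_1,\dots,c_{2\mathbf n^2-\mathbf n-1}\rangle$ is at least $\mathbf n^2$.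
   Context: With $U,V,W\cong\mathbb C^{\mathbf n}$, $A=U^*\otimes V$, $B=V^*\otimes W$, $C=W^*\otimes U$, and $M_{\langle\mathbf n\rangle}=\mathrm{Id}_U\otimes\mathrm{Id}_V\otimes\mathrm{Id}_W$ (factors reordered); in bases, $M_{\langle\mathbf n\rangle}=\sum_{i,j,k=1}^{\mathbf n}x^i_j\otimes y^j_k\otimes z^k_i$. $\mathcal K$ is the set of $[\mu\otimes v\otimes\nu\otimes w\otimes\omega\otimes u]$ with $a=\mu\otimes v$, $b=\nu\otimes w$, $c=\omega\otimes u$ and $\mu(u)=\omega(w)=\nu(v)=0$. *)

(* Defs.v *)
From HB Require Import structures.
From mathcomp Require Import all_boot all_order all_algebra.
Set Implicit Arguments. Unset Strict Implicit. Unset Printing Implicit Defensive.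
Import Order.TTheory GRing.Theory Num.Theory.
Local Open Scope ring_scope.

(* A = U^* (x) V, B = V^* (x) W, C = W^* (x) U, all identified with n x n
   matrices: a : 'M_n has coordinates a i j w.r.t. x^i_j = u^i (x) v_j,
   b j k w.r.t. y^j_k = v^j (x) w_k, c k i w.r.t. z^k_i = w^k (x) u_i.
   An element of A (x) B (x) C is encoded by its coordinate function
   (p,q,s,t,u,v) |-> coefficient of x^p_q (x) y^s_t (x) z^u_v. *)

Definition tensor6 (F : Type) (n : nat) :=
  'I_n -> 'I_n -> 'I_n -> 'I_n -> 'I_n -> 'I_n -> F.

Definition tprod (F : nzRingType) (n : nat) (a b c : 'M[F]_n) : tensor6 F n :=
  fun p q s t u v => a p q * b s t * c u v.

(* matrix multiplication tensor  M_<n> = sum_{i,j,k} x^i_j (x) y^j_k (x) z^k_i *)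
Definition matmul_tensor (F : nzRingType) (n : nat) : tensor6 F n :=
  fun p q s t u v => ((q == s) && (t == u) && (v == p))%:R.

(* [a (x) b (x) c] lies in K: a = mu (x) v, b = nu (x) w, c = omega (x) u
   (mu in U^*, v in V, nu in V^*, w in W, omega in W^*, u in U, all nonzero
   since [.] is a projective point) with mu(u) = omega(w) = nu(v) = 0. *)
Definition in_K (F : nzRingType) (n : nat) (a b c : 'M[F]_n) : Prop :=
  exists (mu v nu w om u : 'I_n -> F),
    [/\ a = \matrix_(i, j) (mu i * v j),
        b = \matrix_(j, k) (nu j * w k) &
        c = \matrix_(k, i) (om k * u i)] /\
    [/\ a != 0, b != 0 & c != 0] /\
    [/\ \sum_i mu i * u i = 0, \sum_k om k * w k = 0 &
        \sum_j nu j * v j = 0].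

(* Main.v *)
Require Import Defs.
From HB Require Import structures.
From mathcomp Require Import all_boot all_order all_algebra.
From mathcomp Require Import zify ring.
Set Implicit Arguments. Unset Strict Implicit. Unset Printing Implicit Defensive.
Import Order.TTheory GRing.Theory Num.Theory.
Local Open Scope ring_scope.

Definition pr (F : nzRingType) (n : nat) (al x : 'M[F]_n) : F :=
  \sum_p \sum_q al p q * x p q.
Definition T3 (F : nzRingType) (n : nat) (al be ga : 'M[F]_n) : F :=
  \sum_p \sum_q \sum_t al p q * be q t * ga t p.

Lemma swap6 (F : comNzRingType) (n : nat) (I : Type) (s : seq I) (P : pred I)
  (w : 'I_n -> 'I_n -> 'I_n -> 'I_n -> 'I_n -> 'I_n -> F)
  (G : I -> 'I_n -> 'I_n -> 'I_n -> 'I_n -> 'I_n -> 'I_n -> F) :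
  \sum_p \sum_q \sum_s' \sum_t \sum_u \sum_v
     w p q s' t u v * (\sum_(i <- s | P i) G i p q s' t u v)
  = \sum_(i <- s | P i) \sum_p \sum_q \sum_s' \sum_t \sum_u \sum_v
     w p q s' t u v * G i p q s' t u v.
Proof.
under eq_bigr => p _ do under eq_bigr => q _ do under eq_bigr => s' _ do
  under eq_bigr => t _ do under eq_bigr => u _ do under eq_bigr => v _ do
  rewrite big_distrr.
under eq_bigr => p _ do under eq_bigr => q _ do under eq_bigr => s' _ do
  under eq_bigr => t _ do under eq_bigr => u _ do rewrite exchange_big.
under eq_bigr => p _ do under eq_bigr => q _ do under eq_bigr => s' _ do
  under eq_bigr => t _ do rewrite exchange_big.
under eq_bigr => p _ do under eq_bigr => q _ do under eq_bigr => s' _ do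
  rewrite exchange_big.
under eq_bigr => p _ do under eq_bigr => q _ do rewrite exchange_big.
under eq_bigr => p _ do rewrite exchange_big.
by rewrite exchange_big.
Qed.

Lemma prod6 (F : comNzRingType) (n : nat) (al be ga x y z : 'M[F]_n) :
  \sum_p \sum_q \sum_s \sum_t \sum_u \sum_v
     (al p q * be s t * ga u v) * tprod x y z p q s t u v
  = pr al x * pr be y * pr ga z.
Proof.
rewrite /pr /tprod -mulrA big_distrl /=; apply: eq_bigr => p _.
rewrite big_distrl /=; apply: eq_bigr => q _.
rewrite big_distrl big_distrr /=; apply: eq_bigr => s _.
rewrite big_distrl big_distrr /=; apply: eq_bigr => t _.
rewrite big_distrr big_distrr /=; apply: eq_bigr => u _.
rewrite big_distrr big_distrr /=; apply: eq_bigr => v _.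
ring.
Qed.

Lemma sum_delta (F : nzRingType) (n : nat) (q : 'I_n) (G : 'I_n -> F) :
  \sum_s (s == q)%:R * G s = G q.
Proof.
rewrite (bigD1 q) //= eqxx mul1r big1 ?addr0 // => s /negPf ->.
by rewrite mul0r.
Qed.

Lemma sum_deltaR (F : nzRingType) (n : nat) (q : 'I_n) (G : 'I_n -> F) :
  \sum_s G s * (s == q)%:R = G q.
Proof.
rewrite (bigD1 q) //= eqxx mulr1 big1 ?addr0 // => s /negPf ->.
by rewrite mulr0.
Qed.

Lemma T6 (F : comNzRingType) (n : nat) (al be ga : 'M[F]_n) :
  \sum_p \sum_q \sum_s \sum_t \sum_u \sum_v
     (al p q * be s t * ga u v) * @matmul_tensor F n p q s t u v
  = T3 al be ga.
Proof.
rewrite /T3 /matmul_tensor; apply: eq_bigr => p _; apply: eq_bigr => q _.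
transitivity (\sum_s (s == q)%:R * \sum_t \sum_u (u == t)%:R *
   \sum_v (v == p)%:R * (al p q * be s t * ga u v)).
  apply: eq_bigr => s _. rewrite mulr_sumr. apply: eq_bigr => t _.
  rewrite mulr_sumr. apply: eq_bigr => u _.
  rewrite !mulr_sumr. apply: eq_bigr => v _.
  rewrite -!mulnb !natrM [(s == q)]eq_sym [(u == t)]eq_sym. ring.
rewrite sum_delta; apply: eq_bigr => t _.
by rewrite sum_delta sum_delta.
Qed.

Definition IDP (F : nzRingType) (n r : nat) (a b c : nat -> 'M[F]_n) :=
  forall al be ga : 'M[F]_n,
  \sum_(1 <= i < r.+1) \sum_(1 <= j < r.+1)
     \sum_(1 <= k < r.+1 | (i + j + k <= r + 2)%N)
       pr al (a i) * pr be (b j) * pr ga (c k) = T3 al be ga.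

Lemma contract (F : comNzRingType) (n r : nat) (a b c : nat -> 'M[F]_n)
  (hM : forall p q s t u v : 'I_n,
     \sum_(1 <= i < r.+1) \sum_(1 <= j < r.+1)
       \sum_(1 <= k < r.+1 | (i + j + k <= r + 2)%N)
         tprod (a i) (b j) (c k) p q s t u v
     = @matmul_tensor F n p q s t u v) : IDP r a b c.
Proof.
move=> al be ga; rewrite -T6; symmetry.
under eq_bigr => p _ do under eq_bigr => q _ do under eq_bigr => s' _ do
  under eq_bigr => t _ do under eq_bigr => u _ do under eq_bigr => v _ do
  rewrite -hM.
rewrite swap6; apply: eq_bigr => i _; rewrite swap6; apply: eq_bigr => j _.
rewrite swap6; apply: eq_bigr => k _; by rewrite prod6.
Qed.

Lemma lead0 (F : nzRingType) (r : nat) (f g h : nat -> F) (i0 j0 k0 : nat) :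
  (forall i, (0 < i < i0)%N -> f i = 0) ->
  (forall j, (0 < j < j0)%N -> g j = 0) ->
  (forall k, (0 < k < k0)%N -> h k = 0) ->
  (r + 2 < i0 + j0 + k0)%N ->
  \sum_(1 <= i < r.+1) \sum_(1 <= j < r.+1)
     \sum_(1 <= k < r.+1 | (i + j + k <= r + 2)%N) f i * g j * h k = 0.
Proof.
move=> hf hg hh hlt.
apply: big1_seq => i /andP[_]; rewrite mem_index_iota => /andP[i1 _].
apply: big1_seq => j /andP[_]; rewrite mem_index_iota => /andP[j1 _].
apply: big1_seq => k /andP[hc]; rewrite mem_index_iota => /andP[k1 _].
case: (ltnP i i0) => [hi|hi]; first by rewrite hf ?mul0r // i1 hi.
case: (ltnP j j0) => [hj|hj]; first by rewrite (hg j) ?mulr0 ?mul0r // j1 hj.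
case: (ltnP k k0) => [hk|hk]; first by rewrite (hh k) ?mulr0 // k1 hk.
exfalso; lia.
Qed.

Lemma lead1 (F : nzRingType) (r : nat) (f g h : nat -> F) (i0 j0 k0 : nat) :
  (forall i, (0 < i < i0)%N -> f i = 0) ->
  (forall j, (0 < j < j0)%N -> g j = 0) ->
  (forall k, (0 < k < k0)%N -> h k = 0) ->
  (0 < i0)%N -> (0 < j0)%N -> (0 < k0)%N ->
  (i0 + j0 + k0 = r + 2)%N ->
  \sum_(1 <= i < r.+1) \sum_(1 <= j < r.+1)
     \sum_(1 <= k < r.+1 | (i + j + k <= r + 2)%N) f i * g j * h k
  = f i0 * g j0 * h k0.
Proof.
move=> hf hg hh i0p j0p k0p he.
have uI : uniq (index_iota 1 r.+1) by rewrite /index_iota iota_uniq.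
rewrite (bigD1_seq i0) ?mem_index_iota //=; last by apply/andP; split; lia.
rewrite [X in _ + X]big1_seq ?addr0; last first.
  move=> i /andP[ni]; rewrite mem_index_iota => /andP[i1 _].
  apply: big1_seq => j /andP[_]; rewrite mem_index_iota => /andP[j1 _].
  apply: big1_seq => k /andP[hc]; rewrite mem_index_iota => /andP[k1 _].
  case: (ltnP i i0) => [hi|hi]; first by rewrite hf ?mul0r // i1 hi.
  case: (ltnP j j0) => [hj|hj]; first by rewrite (hg j) ?mulr0 ?mul0r // j1 hj.
  case: (ltnP k k0) => [hk|hk]; first by rewrite (hh k) ?mulr0 // k1 hk.
  exfalso; move: ni => /eqP ni; lia.
rewrite (bigD1_seq j0) ?mem_index_iota //=; last by apply/andP; split; lia.
rewrite [X in _ + X]big1_seq ?addr0; last first.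
  move=> j /andP[nj]; rewrite mem_index_iota => /andP[j1 _].
  apply: big1_seq => k /andP[hc]; rewrite mem_index_iota => /andP[k1 _].
  case: (ltnP j j0) => [hj|hj]; first by rewrite (hg j) ?mulr0 ?mul0r // j1 hj.
  case: (ltnP k k0) => [hk|hk]; first by rewrite (hh k) ?mulr0 // k1 hk.
  exfalso; move: nj => /eqP nj; lia.
rewrite big_mkcond (bigD1_seq k0) ?mem_index_iota //=; last by apply/andP; split; lia.
rewrite he leqnn big1_seq ?addr0 // => k /andP[nk]; rewrite mem_index_iota.
move=> /andP[k1 _]; case: ifP => // hc.
case: (ltnP k k0) => [hk|hk]; first by rewrite (hh k) ?mulr0 // k1 hk.
exfalso; move: nk => /eqP nk; move: hc; lia.
Qed.

Lemma T3C (F : comNzRingType) (n : nat) (al be ga : 'M[F]_n) :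
  T3 al be ga = T3 be ga al.
Proof.
rewrite /T3; under [RHS]eq_bigr => p _ do rewrite exchange_big.
rewrite [RHS]exchange_big; apply: eq_bigr => p _; apply: eq_bigr => q _.
apply: eq_bigr => t _; ring.
Qed.

Lemma IDPC (F : comNzRingType) (n r : nat) (a b c : nat -> 'M[F]_n) :
  IDP r a b c -> IDP r b c a.
Proof.
move=> H al be ga; rewrite T3C T3C -H.
under eq_bigr => i _ do under eq_bigr => j _ do rewrite big_mkcond.
under [RHS]eq_bigr => i _ do under eq_bigr => j _ do rewrite big_mkcond.
rewrite [RHS]exchange_big; apply: eq_bigr => j _ /=.
rewrite exchange_big; apply: eq_bigr => k _; apply: eq_bigr => i _ /=.
have -> : (k + j + i = j + i + k)%N by lia.
case: ifP => _ //; ring.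
Qed.

Lemma nz_sol (F : fieldType) (I : finType) (k : nat) (A : I -> 'I_k -> F) :
  (k < #|I|)%N -> exists z : I -> F, (exists i, z i != 0) /\
     forall j, \sum_i z i * A i j = 0.
Proof.
move=> hk.
pose Am := \matrix_(i < #|I|, j < k) A (enum_val i) j.
have nz : kermx Am != 0.
  rewrite kermx_eq0; apply/negP => /eqP h.
  by have := rank_leq_col Am; rewrite h; lia.
have [i0 hi0] : exists i0, row i0 (kermx Am) != 0.
  case: (pickP (fun i => row i (kermx Am) != 0)) => [i0 hi0 | h]; first by exists i0.
  exfalso; move/eqP: nz; apply; apply/row_matrixP => i; rewrite row0.
  by apply/eqP; move/negbFE: (h i).
set w := row i0 (kermx Am) in hi0.
have hw : w *m Am = 0 by rewrite -row_mul mulmx_ker row0.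
have [l hl] : exists l, w 0 l != 0.
  case: (pickP (fun l => w 0 l != 0)) => [l hl | h]; first by exists l.
  have w0 : w = 0.
    by apply/rowP => l; move/negbFE/eqP: (h l) => ->; rewrite mxE.
  by rewrite w0 eqxx in hi0.
exists (fun x => w 0 (enum_rank x)); split.
  by exists (enum_val l); rewrite enum_valK.
move=> j; transitivity ((w *m Am) 0 j); last by rewrite hw mxE.
rewrite mxE.
rewrite [RHS](reindex (@enum_rank I)) /=; last first.
  by exists enum_val => x _; [apply: enum_rankK | apply: enum_valK].
by apply: eq_bigr => i _; rewrite /Am !mxE enum_rankK.
Qed.

Lemma prD (F : fieldType) (n : nat) (al x y : 'M[F]_n) :
  pr al (x + y) = pr al x + pr al y.
Proof.
rewrite /pr -big_split; apply: eq_bigr => p _; rewrite -big_split.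
by apply: eq_bigr => q _; rewrite mxE mulrDr.
Qed.

Lemma pr0 (F : fieldType) (n : nat) (al : 'M[F]_n) : pr al 0 = 0.
Proof. by rewrite /pr big1 // => p _; rewrite big1 // => q _; rewrite mxE mulr0. Qed.

Lemma prZ (F : fieldType) (n : nat) (al x : 'M[F]_n) (k : F) :
  pr al (k *: x) = k * pr al x.
Proof.
rewrite /pr mulr_sumr; apply: eq_bigr => p _; rewrite mulr_sumr.
by apply: eq_bigr => q _; rewrite mxE mulrCA.
Qed.

Lemma pr_sum (F : fieldType) (n : nat) (al : 'M[F]_n) (I : Type) (r : seq I)
  (P : pred I) (G : I -> 'M[F]_n) :
  pr al (\sum_(i <- r | P i) G i) = \sum_(i <- r | P i) pr al (G i).
Proof. exact: (big_morph (pr al) (prD al) (pr0 al)). Qed.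

Lemma pr_coord (F : fieldType) (n m : nat) (X : m.-tuple 'M[F]_n) (j : 'I_m)
  (v : 'M[F]_n) :
  coord X j v = pr (\matrix_(p, q) coord X j (delta_mx p q)) v.
Proof.
rewrite {1}(matrix_sum_delta v) linear_sum /pr; apply: eq_bigr => p _.
rewrite linear_sum; apply: eq_bigr => q _.
by rewrite linearZ mxE /= mulrC.
Qed.

Lemma dual_exists (F : fieldType) (n N : nat) (a : nat -> 'M[F]_n) :
  free [seq a i | i <- iota 1 N] -> forall j, (0 < j <= N)%N ->
  exists X : 'M[F]_n, forall i, (0 < i <= N)%N -> pr X (a i) = (i == j)%:R.
Proof.
set s := [seq a i | i <- iota 1 N] => fs j hj.
have ss : size s = N by rewrite size_map size_iota.
have hj' : (j.-1 < size s)%N by rewrite ss; lia.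
pose jj : 'I_(size s) := Ordinal hj'.
exists (\matrix_(p, q) coord (in_tuple s) jj (delta_mx p q)) => i hi.
have hi' : (i.-1 < size s)%N by rewrite ss; lia.
pose ii : 'I_(size s) := Ordinal hi'.
have -> : a i = (in_tuple s)`_ii.
  rewrite /= (nth_map 0%N) ?nth_iota; first by congr a; lia.
    lia.
  by rewrite size_iota; lia.
rewrite -pr_coord coord_free //.
have -> : (ii == jj) = (i == j) => //.
apply/idP/idP => /eqP h; apply/eqP.
  by move: (congr1 val h) => /=; lia.
by apply: val_inj => /=; rewrite h.
Qed.

Lemma mx_nz (F : fieldType) (n : nat) (z : 'I_n * 'I_n -> F) :
  (exists i, z i != 0) -> (\matrix_(p, q) z (p, q) : 'M[F]_n) != 0.
Proof.
case=> [[p q] hz]; apply/negP => /eqP h.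
by move: hz; have := congr1 (fun M : 'M[F]_n => M p q) h; rewrite !mxE => ->; rewrite eqxx.
Qed.

Lemma annih (F : fieldType) (n : nat) (s : seq 'M[F]_n) :
  (\dim (span s) < n ^ 2)%N ->
  exists al : 'M[F]_n, al != 0 /\ forall v, v \in s -> pr al v = 0.
Proof.
move=> hd.
have hk : (\dim (span s) < #|{: 'I_n * 'I_n}|)%N.
  by rewrite card_prod card_ord mulnn.
have [z [nz hz]] := @nz_sol F ('I_n * 'I_n)%type (\dim (span s))
   (fun pq l => (vbasis (span s))`_l pq.1 pq.2) hk.
exists (\matrix_(p, q) z (p, q)); split; first exact: mx_nz.
have hX : forall l : 'I_(\dim (span s)),
    pr (\matrix_(p, q) z (p, q)) (vbasis (span s))`_l = 0.
  move=> l; rewrite -(hz l) /pr pair_bigA /=; apply: eq_bigr => [[p q]] _.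
  by rewrite mxE.
move=> v /memv_span /coord_vbasis ->; rewrite pr_sum big1 // => l _.
by rewrite prZ hX mulr0.
Qed.

Lemma T3_rank1 (F : comNzRingType) (n : nat) (al be : 'M[F]_n) (x y : 'I_n -> F) :
  T3 al be (\matrix_(t, p) (x t * y p)) =
  \sum_q (\sum_p y p * al p q) * (\sum_t be q t * x t).
Proof.
rewrite /T3 exchange_big; apply: eq_bigr => q _ /=.
rewrite mulr_suml; apply: eq_bigr => p _; rewrite mulr_sumr.
by apply: eq_bigr => t _; rewrite mxE; ring.
Qed.

Lemma mx_entry_nz (F : nzRingType) (n : nat) (al : 'M[F]_n) :
  al != 0 -> exists p q, al p q != 0.
Proof.
move=> h; case: (pickP (fun pq : 'I_n * 'I_n => al pq.1 pq.2 != 0)) => [[p q] hpq|hn].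
  by exists p, q.
exfalso; move/negP: h; apply; apply/eqP/matrixP => p q; rewrite mxE.
by move/negbFE/eqP: (hn (p, q)).
Qed.

Lemma fun_entry_nz (F : nzRingType) (I : finType) (z : I -> F) :
  (exists i, z i != 0) -> exists i, z i != 0.
Proof. by []. Qed.

Lemma core2 (F : fieldType) (n r : nat) (a b c : nat -> 'M[F]_n) :
  (2 <= n)%N -> r = (2 * n ^ 2 - 2)%N -> IDP r a b c ->
  (n ^ 2 <= \dim (span [seq a i | i <- iota 1 (2 * n ^ 2 - n - 1)]))%N.
Proof.
move=> hn hr hI; rewrite leqNgt; apply/negP => hd.
have [al [nz hal]] := annih hd.
have hN : (n + 2 <= n ^ 2)%N by nia.
remember (n ^ 2)%N as N eqn:HN; subst r.
have [p0 [q0 hpq]] := mx_entry_nz nz.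
have hk : (n.-1 < #|{: 'I_n}|)%N by rewrite card_ord; lia.
have [z [[t0 hz0] hz]] := @nz_sol F 'I_n n.-1 (fun t l => b l.+1 q0 t) hk.
pose be : 'M[F]_n := \matrix_(q, t) ((q == q0)%:R * z t).
pose ga : 'M[F]_n := \matrix_(t, p) ((t == t0)%:R * (p == p0)%:R).
have hv : T3 al be ga = al p0 q0 * z t0.
  rewrite /ga T3_rank1.
  under eq_bigr => q _ do rewrite sum_delta sum_deltaR /be mxE.
  rewrite (eq_bigr (fun q => (q == q0)%:R * (al p0 q * z t0))).
    by rewrite sum_delta.
  by move=> q _; ring.
have h0 : T3 al be ga = 0.
  rewrite -hI; apply: (@lead0 F (2 * N - 2) (fun i => pr al (a i))
     (fun j => pr be (b j)) (fun k => pr ga (c k)) (2 * N - n - 1).+1 n 1).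
  - move=> i hi; apply: hal; apply: map_f; rewrite mem_iota; lia.
  - move=> j hj.
    have hj' : (j.-1 < n.-1)%N by lia.
    have := hz (Ordinal hj'); rewrite /= prednK; last by lia.
    move=> <-; rewrite /pr.
    rewrite (eq_bigr (fun q => (q == q0)%:R * \sum_t z t * b j q t)).
      by rewrite sum_delta.
    move=> q _; rewrite mulr_sumr; apply: eq_bigr => t _; rewrite /be mxE; ring.
  - by move=> k; lia.
  - lia.
have : al p0 q0 * z t0 != 0 by rewrite mulf_neq0.
by rewrite -hv h0 eqxx.
Qed.

Lemma T3_delta (F : comNzRingType) (n : nat) (al ga : 'M[F]_n) (q t : 'I_n) :
  T3 al (delta_mx q t) ga = \sum_p al p q * ga t p.
Proof.
rewrite /T3; apply: eq_bigr => p _.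
rewrite (eq_bigr (fun q' => (q' == q)%:R * \sum_t' (t' == t)%:R * (al p q' * ga t' p))).
  by rewrite sum_delta sum_delta.
move=> q' _; rewrite mulr_sumr; apply: eq_bigr => t' _; rewrite mxE.
by rewrite -mulnb natrM; ring.
Qed.




Lemma prlD (F : fieldType) (n : nat) (al be x : 'M[F]_n) :
  pr (al + be) x = pr al x + pr be x.
Proof.
rewrite /pr -big_split; apply: eq_bigr => p _; rewrite -big_split.
by apply: eq_bigr => q _; rewrite mxE mulrDl.
Qed.

Lemma prl0 (F : fieldType) (n : nat) (x : 'M[F]_n) : pr 0 x = 0.
Proof. by rewrite /pr big1 // => p _; rewrite big1 // => q _; rewrite mxE mul0r. Qed.

Lemma prlZ (F : fieldType) (n : nat) (al x : 'M[F]_n) (k : F) :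
  pr (k *: al) x = k * pr al x.
Proof.
rewrite /pr mulr_sumr; apply: eq_bigr => p _; rewrite mulr_sumr.
by apply: eq_bigr => q _; rewrite mxE mulrA.
Qed.

Lemma prl_sum (F : fieldType) (n : nat) (x : 'M[F]_n) (I : Type) (r : seq I)
  (P : pred I) (G : I -> 'M[F]_n) :
  pr (\sum_(i <- r | P i) G i) x = \sum_(i <- r | P i) pr (G i) x.
Proof. exact: (big_morph (fun al => pr al x) (fun u v => prlD u v x) (prl0 x)). Qed.

Lemma T3_r1_delta (F : comNzRingType) (n : nat) (be : 'M[F]_n) (x y : 'I_n -> F)
  (p1 q1 : 'I_n) :
  T3 (delta_mx p1 q1) be (\matrix_(t, p) (x t * y p)) = y p1 * \sum_t be q1 t * x t.
Proof.
rewrite T3_rank1 (bigD1 q1) //= [X in _ + X]big1 ?addr0.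
  congr (_ * _); rewrite (bigD1 p1) //= mxE !eqxx mulr1 big1 ?addr0 // => p hp.
  by rewrite mxE (negPf hp) mulr0.
move=> q hq; rewrite big1 ?mul0r // => p _.
by rewrite mxE (negPf hq) andbF mulr0.
Qed.

Ltac is_arith T := match T with
 | is_true (leq _ _) => idtac
 | is_true (_ && _) => idtac
 | is_true (negb _) => idtac
 | is_true (@eq_op _ _ _) => idtac
 | @eq nat _ _ => idtac
 | ~ _ => idtac
 end.
Ltac slia := repeat match goal with H : ?T |- _ =>
   tryif is_arith T then fail else clear H end; lia.

Lemma core1 (F : fieldType) (n r : nat) (a b c : nat -> 'M[F]_n) :
  (2 <= n)%N -> r = (2 * n ^ 2 - 2)%N -> IDP r a b c ->
  free [seq a i | i <- iota 1 (n ^ 2)] -> free [seq b i | i <- iota 1 (n ^ 2)] ->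
  False.
Proof.
move=> hn hr hI fa fb.
have hN : (n + 2 <= n ^ 2)%N by nia.
have hcard : #|{: 'I_n * 'I_n}| = (n ^ 2)%N by rewrite card_prod card_ord mulnn.
remember (n ^ 2)%N as N eqn:HN; subst r.
clear HN.
have [XN hXN] := @dual_exists F n N a fa N ltac:(slia).
have hk1 : (N.-1 < #|{: 'I_n * 'I_n}|)%N by rewrite hcard; slia.
have [z0 [nz0 hz0]] := @nz_sol F ('I_n * 'I_n)%type N.-1
   (fun pq l => c l.+1 pq.1 pq.2) hk1.
pose g0 : 'M[F]_n := \matrix_(p, q) z0 (p, q).
have g0nz : g0 != 0 by apply: mx_nz.
have hg0 : forall k, (0 < k < N)%N -> pr g0 (c k) = 0.
  move=> k hk; have hk' : (k.-1 < N.-1)%N by slia.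
  have := hz0 (Ordinal hk'); rewrite /= prednK; last by slia.
  move=> <-; rewrite /pr pair_bigA /=; apply: eq_bigr => [[p q]] _.
  by rewrite mxE.
have h3 : forall q t, \sum_p XN p q * g0 t p = 0.
  move=> q t; rewrite -T3_delta -hI.
  apply: (@lead0 F (2 * N - 2) (fun i => pr XN (a i))
     (fun j => pr (delta_mx q t) (b j)) (fun k => pr g0 (c k)) N 1 N).
  - move=> i hi; rewrite hXN; last by slia.
    by have -> : (i == N) = false by apply/eqP; slia.
  - by move=> j; slia.
  - by move=> k hk; apply: hg0.
  - slia.
have [t1 [p1 ht1]] := mx_entry_nz g0nz.
pose y := fun p => g0 t1 p.
have hy : forall q, \sum_p y p * XN p q = 0.
  move=> q; rewrite -[RHS](h3 q t1).
  by apply: eq_bigr => p _; rewrite mulrC.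
set K := (2 * N - n - 1)%N.
have hk2 : (1 < #|{: 'I_n}|)%N by rewrite card_ord.
have [x [[t2 hx2] hx]] := @nz_sol F 'I_n 1
   (fun t _ => \sum_p y p * c K t p) hk2.
pose ga : 'M[F]_n := \matrix_(t, p) (x t * y p).
have pr_ga : forall v, pr ga v = \sum_t x t * \sum_p y p * v t p.
  move=> v; rewrite /pr; apply: eq_bigr => t _; rewrite mulr_sumr.
  by apply: eq_bigr => p _; rewrite mxE mulrA.
have hgaK : pr ga (c K) = 0 by rewrite pr_ga; apply: (hx ord0).
have hT0 : forall be, T3 XN be ga = 0.
  by move=> be; rewrite T3_rank1 big1 // => q _; rewrite hy mul0r.
have h6 : forall k, (0 < k < N)%N -> pr ga (c k) = 0.
  elim/ltn_ind => k IH hk.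
  have [Yk hYk] := @dual_exists F n N b fb (N - k) ltac:(slia).
  have : T3 XN Yk ga = pr XN (a N) * pr Yk (b (N - k)%N) * pr ga (c k).
    rewrite -hI; apply: (@lead1 F (2 * N - 2) (fun i => pr XN (a i))
     (fun j => pr Yk (b j)) (fun k => pr ga (c k)) N (N - k)%N k).
    - move=> i hi; rewrite hXN; last by slia.
      by have -> : (i == N) = false by apply/eqP; slia.
    - move=> j hj; rewrite hYk; last by slia.
      by have -> : (j == N - k)%N = false by apply/eqP; slia.
    - by move=> k' hk'; apply: IH; slia.
    - slia.
    - slia.
    - slia.
    - slia.
  rewrite hT0 hXN ?hYk ?eqxx ?mul1r //; try slia.
have hyp1 : y p1 != 0 by [].
have hne : exists k, (0 < k <= 2 * N - 2)%N && (pr ga (c k) != 0).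
  case: (boolP [exists k : 'I_(2 * N - 1), (0 < k)%N && (pr ga (c k) != 0)]).
    case/existsP => k /andP[k1 k2]; exists k; rewrite k2 k1 andbT /=.
    by have := ltn_ord k; slia.
  rewrite negb_exists => /forallP hall; exfalso.
  have : T3 (delta_mx p1 p1) (delta_mx p1 t2) ga = 0.
    rewrite -hI; apply: (@lead0 F (2 * N - 2) (fun i => pr (delta_mx p1 p1) (a i))
     (fun j => pr (delta_mx p1 t2) (b j)) (fun k => pr ga (c k)) 1 1 (2 * N - 1)).
    - by move=> i; slia.
    - by move=> j; slia.
    - move=> k hk; have hk' : (k < 2 * N - 1)%N by slia.
      have := hall (Ordinal hk'); rewrite /= negb_and.
      by case/orP => [/negPn|/negPn/eqP //]; slia.
    - slia.
  rewrite T3_r1_delta (bigD1 t2) //= big1 ?addr0.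
    by rewrite mxE !eqxx mul1r => /eqP; rewrite mulf_eq0 (negPf hyp1) (negPf hx2).
  by move=> t ht; rewrite mxE eqxx /= (negPf ht) mul0r.
case: (ex_minnP hne) => k0 /andP[hk0r hk0nz] hmin.
have hlow : forall k, (0 < k < k0)%N -> pr ga (c k) = 0.
  move=> k hk; apply/eqP; apply/negPn/negP => hnz.
  have := hmin k; rewrite hnz andbT.
  have -> : (0 < k <= 2 * N - 2)%N by slia.
  by move=> /(_ isT); slia.
have hk0N : (N <= k0)%N.
  rewrite leqNgt; apply/negP => hlt.
  by move: hk0nz; rewrite h6 ?eqxx //; slia.
have hk0K : k0 != K.
  by apply/negP => /eqP e; move: hk0nz; rewrite e hgaK eqxx.
case: (leqP (2 * N - n) k0) => hcase.
  have hk3 : ((2 * N - k0).-1 < #|{: 'I_n}|)%N by rewrite card_ord; slia.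
  have [z [[q2 hz2] hz]] := @nz_sol F 'I_n (2 * N - k0).-1
     (fun q l => b l.+1 q t2) hk3.
  pose be : 'M[F]_n := \matrix_(q, t) (z q * (t == t2)%:R).
  have hv : T3 (delta_mx p1 q2) be ga = y p1 * (z q2 * x t2).
    rewrite T3_r1_delta (bigD1 t2) //= big1 ?addr0.
      by rewrite mxE eqxx mulr1.
    by move=> t ht; rewrite mxE (negPf ht) mulr0 mul0r.
  have : T3 (delta_mx p1 q2) be ga = 0.
    rewrite -hI; apply: (@lead0 F (2 * N - 2) (fun i => pr (delta_mx p1 q2) (a i))
     (fun j => pr be (b j)) (fun k => pr ga (c k)) 1 (2 * N - k0)%N k0).
    - by move=> i; slia.
    - move=> j hj; have hj' : (j.-1 < (2 * N - k0).-1)%N by slia.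
      have := hz (Ordinal hj'); rewrite /= prednK; last by slia.
      move=> <-; rewrite /pr; apply: eq_bigr => q _.
      rewrite (bigD1 t2) //= big1 ?addr0; first by rewrite mxE eqxx mulr1.
      by move=> t ht; rewrite mxE (negPf ht) mulr0 mul0r.
    - exact: hlow.
    - slia.
  rewrite hv => /eqP; rewrite !mulf_eq0 (negPf hyp1) (negPf hz2) (negPf hx2).
  by [].
have hkB : (k0 + n + 2 <= 2 * N)%N.
  by move: hk0K; rewrite /K => /eqP hk0K; slia.
have : forall i : 'I_n.+1, exists X : 'M[F]_n,
    forall i', (0 < i' <= N)%N -> pr X (a i') = (i' == i.+1)%:R.
  by move=> i; apply: (@dual_exists F n N a fa i.+1); have := ltn_ord i; slia.
case/fin_all_exists => Xf hXf.
have hk4 : (n < #|{: 'I_n.+1}|)%N by rewrite card_ord.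
have [z [[i1 hz1] hz]] := @nz_sol F 'I_n.+1 n
   (fun i q => \sum_p y p * Xf i p q) hk4.
pose al : 'M[F]_n := \sum_i z i *: Xf i.
have hT1 : forall be, T3 al be ga = 0.
  move=> be; rewrite T3_rank1 big1 // => q _.
  suff -> : \sum_p y p * al p q = 0 by rewrite mul0r.
  rewrite -[RHS](hz q).
  transitivity (\sum_p \sum_i z i * (y p * Xf i p q)).
    apply: eq_bigr => p _; rewrite /al summxE mulr_sumr.
    by apply: eq_bigr => i _; rewrite mxE; ring.
  rewrite exchange_big /=; apply: eq_bigr => i _; rewrite mulr_sumr.
  by apply: eq_bigr => p _.
pose zn := fun i' : nat => \sum_(j < n.+1) z j * (i' == j.+1)%:R.
have hpral : forall i', (0 < i' <= N)%N -> pr al (a i') = zn i'.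
  move=> i' hi'; rewrite /al prl_sum; apply: eq_bigr => j _.
  by rewrite prlZ hXf.
have hzn1 : zn i1.+1 = z i1.
  rewrite /zn -[RHS](sum_deltaR i1 z); apply: eq_bigr => j _.
  by rewrite eqSS eq_sym.
have hzex : exists i, (0 < i <= n.+1)%N && (zn i != 0).
  by exists i1.+1; rewrite hzn1 hz1 ltn_ord.
case: (ex_minnP hzex) => i0 /andP[hi0r hi0nz] hmin2.
have [Y hY] := @dual_exists F n N b fb (2 * N - k0 - i0)%N ltac:(slia).
have : T3 al Y ga = pr al (a i0) * pr Y (b (2 * N - k0 - i0)%N) * pr ga (c k0).
  rewrite -hI; apply: (@lead1 F (2 * N - 2) (fun i => pr al (a i))
     (fun j => pr Y (b j)) (fun k => pr ga (c k)) i0 (2 * N - k0 - i0)%N k0).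
  - move=> i hi; rewrite hpral; last by slia.
    apply/eqP; apply/negPn/negP => hnz.
    have := hmin2 i; rewrite hnz andbT.
    have -> : (0 < i <= n.+1)%N by slia.
    by move=> /(_ isT); slia.
  - move=> j hj; rewrite hY; last by slia.
    by have -> : (j == 2 * N - k0 - i0)%N = false by apply/eqP; slia.
  - exact: hlow.
  - slia.
  - slia.
  - slia.
  - slia.
rewrite hT1 hpral ?hY ?eqxx ?mulr1; try slia.
move=> /eqP; rewrite eq_sym mulf_eq0 (negPf hi0nz) (negPf hk0nz).
by [].
Qed.

Unset Implicit Arguments. Set Strict Implicit.

Theorem proposition4p5 (F : numClosedFieldType) (n r : nat)
  (hn : (2 <= n)%N) (hr : r = (2 * n ^ 2 - 2)%N)
  (a b c : nat -> 'M[F]_n)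
  (hK : in_K (a 1%N) (b 1%N) (c 1%N))
  (hM : forall p q s t u v : 'I_n,
     \sum_(1 <= i < r.+1) \sum_(1 <= j < r.+1)
       \sum_(1 <= k < r.+1 | (i + j + k <= r + 2)%N)
         tprod (a i) (b j) (c k) p q s t u v
     = @matmul_tensor F n p q s t u v) :
  let sa := [seq a i | i <- iota 1 (n ^ 2)] in
  let sb := [seq b i | i <- iota 1 (n ^ 2)] in
  let sc := [seq c i | i <- iota 1 (n ^ 2)] in
  let m := (2 * n ^ 2 - n - 1)%N in
  [/\ ~~ (free sa && free sb), ~~ (free sa && free sc) & ~~ (free sb && free sc)] /\
  [/\ (n ^ 2 <= \dim (span [seq a i | i <- iota 1 m]))%N,
       (n ^ 2 <= \dim (span [seq b i | i <- iota 1 m]))%N &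
      (n ^ 2 <= \dim (span [seq c i | i <- iota 1 m]))%N].
Proof.
move=> sa sb sc m.
have hI := contract hM.
have hI2 := IDPC hI.
have hI3 := IDPC hI2.
split; first split.
- by apply/negP => /andP[fa fb]; exact: (core1 hn hr hI fa fb).
- by apply/negP => /andP[fa fc]; exact: (core1 hn hr hI3 fc fa).
- by apply/negP => /andP[fb fc]; exact: (core1 hn hr hI2 fb fc).
split.
- exact: (core2 hn hr hI).
- exact: (core2 hn hr hI2).
- exact: (core2 hn hr hI3).
Qed.
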